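(* Every enhanced Gelfand--Zetlin pattern of rank zero is efficient.
   Context: Let $\lambda=(\lambda_1\ge\dots\ge\lambda_n)$ be a partition. A GZ pattern with top row $\lambda$ is an integer array $a_{ij}$, $0\le i\le n-1$, $1\le j\le n-i$, with $a_{0j}=\lambda_{n+1-j}$ and $a_{i-1,j}\le a_{ij}\le a_{i-1,j+1}$ ($a_{ij}$ sits below $a_{i-1,j}$ and $a_{i-1,j+1}$). An enhanced GZ pattern is such an array with a set of encircled entries and a set of edges, each joining an $a_{ij}$ ($i\ge1$) with $a_{i-1,j}$ or $a_{i-1,j+1}$, such that: (1) row $0$ entries are encircled; (2) entries joined by an edge are equal and the lower one is encircled; (3) for $i\ge1$, $1\le j\le n-i-1$: both $a_{ij},a_{i,j+1}$ are joined to $a_{i-1,j+1}$ iff both are joined to $a_{i+1,j}$; (4) if $a_{0j}=a_{0,j+1}$ then $a_{1j}$ is encircled and joined to both; (5) if $a_{i-1,j}<a_{i-1,j+1}$ and $a_{ij}=a_{i-1,j}$, then $a_{ij}$ is encircled and joined to $a_{i-1,j}$; (6) if $a_{i-1,j}<a_{i-1,j+1}$, $a_{ij}=a_{i-1,j+1}$ and $a_{ij}$ is encircled, then it is joined to $a_{i-1,j+1}$; (7) if $a_{i-1,j}=a_{i-1,j+1}=a_{ij}$ and $a_{i-1,j},a_{i-1,j+1}$ can be connected by a path of edges, then $a_{ij}$ is encircled and joined to both; (8) if $a_{i-1,j}=a_{i-1,j+1}=a_{ij}$ and $a_{ij}$ is encircled, then it is joined to at least one of them. The rank is the number of non-encircled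 entries. The pattern is inefficient if it contains $a_{i-1,j}=a_{i-1,j+1}=a_{ij}$ with no edge between $a_{ij}$ and $a_{i-1,j+1}$, and efficient otherwise. *)

(* Defs.v *)
From mathcomp Require Import all_boot.
Set Implicit Arguments. Unset Strict Implicit. Unset Printing Implicit Defensive.

(* Conventions.
   n            : number of parts of the partition (size of the top row).
   lam k        : lambda_k, for 1 <= k <= n (values outside are irrelevant).
   a i j        : the entry a_{ij}; row i (0 <= i <= n-1) has entries j = 1..n-i.
   enc i j      : a_{ij} is encircled.
   eL i j       : there is an edge joining a_{ij} (i >= 1) with a_{i-1,j}.
   eR i j       : there is an edge joining a_{ij} (i >= 1) with a_{i-1,j+1}. *)

Definition is_partition (n : nat) (lam : nat -> nat) : Prop :=
  forall k, 1 <= k -> k < n -> lam k.+1 <= lam k.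

Definition valid_pos (n i j : nat) : bool := (i < n) && (1 <= j <= n - i).

Definition GZ_pattern (n : nat) (lam : nat -> nat) (a : nat -> nat -> nat) : Prop :=
  (forall j, 1 <= j <= n -> a 0 j = lam (n.+1 - j)) /\
  (forall i j, valid_pos n i.+1 j -> a i j <= a i.+1 j /\ a i.+1 j <= a i j.+1).

Inductive edge_adj (eL eR : nat -> nat -> bool) : nat * nat -> nat * nat -> Prop :=
  | adjL_down i j : eL i.+1 j -> edge_adj eL eR (i.+1, j) (i, j)
  | adjL_up   i j : eL i.+1 j -> edge_adj eL eR (i, j) (i.+1, j)
  | adjR_down i j : eR i.+1 j -> edge_adj eL eR (i.+1, j) (i, j.+1)
  | adjR_up   i j : eR i.+1 j -> edge_adj eL eR (i, j.+1) (i.+1, j).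

Inductive edge_connected (eL eR : nat -> nat -> bool) : nat * nat -> nat * nat -> Prop :=
  | ec_refl p : edge_connected eL eR p p
  | ec_step p q r : edge_adj eL eR p q -> edge_connected eL eR q r ->
                    edge_connected eL eR p r.

Definition enhanced_GZ (n : nat) (lam : nat -> nat) (a : nat -> nat -> nat)
    (enc eL eR : nat -> nat -> bool) : Prop :=
  GZ_pattern n lam a /\
  (forall i j, eL i j -> 1 <= i /\ valid_pos n i j) /\
  (forall i j, eR i j -> 1 <= i /\ valid_pos n i j) /\
  (forall j, valid_pos n 0 j -> enc 0 j) /\
  (forall i j, eL i.+1 j -> a i.+1 j = a i j /\ enc i.+1 j) /\
  (forall i j, eR i.+1 j -> a i.+1 j = a i j.+1 /\ enc i.+1 j) /\
  (forall i j, 1 <= i -> 1 <= j -> j <= n - i - 1 ->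
     (eR i j && eL i j.+1) = (eL i.+1 j && eR i.+1 j)) /\
  (forall j, 1 <= j -> j < n -> a 0 j = a 0 j.+1 ->
     [&& enc 1 j, eL 1 j & eR 1 j]) /\
  (forall i j, valid_pos n i.+1 j -> a i j < a i j.+1 -> a i.+1 j = a i j ->
     enc i.+1 j && eL i.+1 j) /\
  (forall i j, valid_pos n i.+1 j -> a i j < a i j.+1 -> a i.+1 j = a i j.+1 ->
     enc i.+1 j -> eR i.+1 j) /\
  (forall i j, valid_pos n i.+1 j -> a i j = a i j.+1 -> a i.+1 j = a i j ->
     edge_connected eL eR (i, j) (i, j.+1) ->
     [&& enc i.+1 j, eL i.+1 j & eR i.+1 j]) /\
  (forall i j, valid_pos n i.+1 j -> a i j = a i j.+1 -> a i.+1 j = a i j ->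
     enc i.+1 j -> eL i.+1 j || eR i.+1 j).

Definition GZ_rank (n : nat) (enc : nat -> nat -> bool) : nat :=
  \sum_(0 <= i < n) \sum_(1 <= j < (n - i).+1) ~~ enc i j.

Definition inefficient (n : nat) (a : nat -> nat -> nat) (eR : nat -> nat -> bool) : Prop :=
  exists i j, [/\ valid_pos n i.+1 j, a i j = a i j.+1, a i.+1 j = a i j & ~~ eR i.+1 j].

Definition efficient n a eR : Prop := ~ inefficient n a eR.

(* Main.v *)
Require Import Defs.
From mathcomp Require Import all_boot.
From mathcomp Require Import zify.

Lemma rank0_enc n enc : GZ_rank n enc = 0 ->
  forall i j, valid_pos n i j -> enc i j.
Proof.
move=> H i j /andP[hi /andP[h1 h2]].
move: H; rewrite /GZ_rank => /eqP; rewrite sum_nat_seq_eq0 => /allP /(_ i).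
rewrite mem_index_iota hi => /(_ isT) /=; rewrite sum_nat_seq_eq0 => /allP /(_ j).
rewrite mem_index_iota h1 ltnS h2 => /(_ isT) /=; by case: (enc i j).
Qed.

Theorem proposition4p1 (n : nat) (lam : nat -> nat) (a : nat -> nat -> nat)
    (enc eL eR : nat -> nat -> bool) :
  is_partition n lam ->
  enhanced_GZ n lam a enc eL eR ->
  GZ_rank n enc = 0 ->
  efficient n a eR.
Proof.
move=> _ [[_ GZ] [_ [_ [_ [_ [_ [_ [H4 [H5 [H6 [H7 _]]]]]]]]]]] /rank0_enc Henc.
have claim : forall i j, i < n -> 1 <= j -> j.+1 <= n - i -> a i j = a i j.+1 ->
    edge_connected eL eR (i, j) (i, j.+1).
  elim=> [|i IH] j hi hj hj2 heq.
    have /and3P[_ hL hR] := H4 j hj ltac:(lia) heq.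
    apply: ec_step; first exact: adjL_up hL.
    apply: ec_step; first exact: adjR_down hR.
    exact: ec_refl.
  have v1 : valid_pos n i.+1 j by rewrite /valid_pos; lia.
  have v2 : valid_pos n i.+1 j.+1 by rewrite /valid_pos; lia.
  have [g1 g2] := GZ _ _ v1.
  have [g3 g4] := GZ _ _ v2.
  have hL : eL i.+1 j.+1.
    have [lt|ge] := ltnP (a i j.+1) (a i j.+2).
      by have /andP[] := H5 i j.+1 v2 lt ltac:(lia).
    have e : a i j.+1 = a i j.+2 by lia.
    have c := IH j.+1 ltac:(lia) isT ltac:(lia) e.
    by have /and3P[] := H7 i j.+1 v2 e ltac:(lia) c.
  have hR : eR i.+1 j.
    have [lt|ge] := ltnP (a i j) (a i j.+1).
      apply: (H6 i j v1 lt); first lia; exact: Henc.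
    have e : a i j = a i j.+1 by lia.
    have c := IH j ltac:(lia) hj ltac:(lia) e.
    by have /and3P[] := H7 i j v1 e ltac:(lia) c.
  apply: ec_step; first exact: adjR_down hR.
  apply: ec_step; first exact: adjL_up hL.
  exact: ec_refl.
move=> [i [j [v e1 e2 nR]]].
move: (v) => /andP[hi /andP[h1 h2]].
have c := claim i j ltac:(lia) h1 ltac:(lia) e1.
have /and3P[_ _ hR] := H7 i j v e1 e2 c.
by rewrite hR in nR.
Qed.
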